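(* Let $p_{\pm1}:E\to E_{\pm1}$, $x\mapsto x_{\pm1}$, and $p^-:E\to E_1\oplus E_{-1}=E^-$, $x\mapsto x_1+x_{-1}=\frac12(x-\tau x)$. Then: (i) $p_{\pm1}(C)=\pm C_\pm$ and $p_{\pm1}(C^0)=\pm C^0_\pm\neq\emptyset$; (ii) $p^-(C)=C\cap E^-=C_+\oplus(-C_-)$ and $p^-(C^0)=C^0\cap E^-=C_+^0\oplus(-C_-^0)$; (iii) $C\subseteq C_+\oplus E_0\oplus(-C_-)$.
   Context: $E$ finite-dimensional real vector space; $h\in\mathrm{End}(E)$ diagonalizable with eigenvalues in $\{-1,0,1\}$, $E_j=\ker(h-j\,\mathrm{id})$, $x=x_1+x_0+x_{-1}$; $\tau=e^{\pi ih}$ ($\mathrm{id}$ on $E_0$, $-\mathrm{id}$ on $E_1\oplus E_{-1}$); $C\subseteq E$ pointed generating closed convex cone with $e^{th}C=C$ for all $t$ and $-\tau(C)=C$; $C^0$ interior of $C$; $C_\pm=\pm C\cap E_{\pm1}$ and $C_\pm^0$ their interiors relative to $E_{\pm1}$. *)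

(* Defs.v *)
From HB Require Import structures.
From mathcomp Require Import all_boot all_order all_algebra.
From mathcomp Require Import all_classical all_reals all_analysis.
Set Implicit Arguments. Unset Strict Implicit. Unset Printing Implicit Defensive.
Import Order.TTheory GRing.Theory Num.Theory.
Import numFieldNormedType.Exports.
Local Open Scope classical_set_scope.
Local Open Scope ring_scope.

(* E = 'rV[R]_n (row vectors), h acts on the right: x |-> x *m h. *)
Section Defs.
Variables (R : realType) (n : nat).
Implicit Types (h : 'M[R]_n) (C A : set 'rV[R]_n) (x : 'rV[R]_n).

Definition eigsp h (j : R) : set 'rV[R]_n := [set x | x *m h = j *: x].

(* the components x_1, x_0, x_{-1} of x = x_1 + x_0 + x_{-1}
   (valid when h is diagonalizable with eigenvalues in {-1,0,1}) *)
Definition p1 h x : 'rV[R]_n := 2^-1 *: (x *m h + x *m (h *m h)).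
Definition pm1 h x : 'rV[R]_n := 2^-1 *: (x *m (h *m h) - x *m h).
Definition p0 h x : 'rV[R]_n := x - x *m (h *m h).
Definition pminus h x : 'rV[R]_n := p1 h x + pm1 h x.
(* tau = e^{pi i h}: id on E_0, -id on E_1 (+) E_{-1} *)
Definition tau h x : 'rV[R]_n := p0 h x - p1 h x - pm1 h x.

Definition matexp (A : 'M[R]_n) : 'M[R]_n :=
  lim ((fun N : nat => \sum_(k < N) (k`!%:R)^-1 *: A ^+ k) @ \oo).

Definition convex_cone C :=
  C 0 /\ (forall x y, C x -> C y -> C (x + y)) /\
  (forall (a : R) x, 0 <= a -> C x -> C (a *: x)).
Definition pointed C := forall x, C x -> C (- x) -> x = 0.
Definition generating C := forall x, exists a b, C a /\ C b /\ x = a - b.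

Definition relint (V A : set 'rV[R]_n) : set 'rV[R]_n :=
  [set x | exists U : set 'rV[R]_n, open U /\ U x /\ U `&` V `<=` A] `&` V.

Definition setopp A : set 'rV[R]_n := (fun x => - x) @` A.
Definition setadd (A B : set 'rV[R]_n) : set 'rV[R]_n :=
  [set z | exists a b, A a /\ B b /\ z = a + b].

End Defs.

(* Main.v *)
Set Warnings "-all".
Require Import Defs.
From HB Require Import structures.
From mathcomp Require Import all_boot all_order all_algebra.
From mathcomp Require Import all_classical all_reals all_analysis.
From mathcomp Require Import ring lra.
Import Order.TTheory GRing.Theory Num.Theory.
Import numFieldNormedType.Exports.
Local Open Scope classical_set_scope.
Local Open Scope ring_scope.

Section Alg.
Variables (R : realType) (n : nat).
Implicit Types (h : 'M[R]_n) (x : 'rV[R]_n).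

Lemma diag_h3 h : diagonalizable h ->
  (forall a : R, eigenvalue h a -> a \in [:: -1; 0; 1]) -> h *m h *m h = h.
Proof.
move=> [P Pu /diagonalizable_forPex [D /(simmxP Pu) PhD]] Hev.
have HD : forall i, D 0 i ^+ 3 = D 0 i.
  move=> i; have : eigenvalue h (D 0 i).
    apply/eigenvalueP; exists (row i P).
      by rewrite -(row_mul i P h) PhD mul_diag_mx; apply/rowP => j; rewrite !mxE.
    apply/eqP => H.
    have : row i P *m invmx P = 0 by rewrite H mul0mx.
    rewrite rowE mulmxK // => /matrixP /(_ 0 i); rewrite !mxE !eqxx /= => /eqP.
    by rewrite oner_eq0.
  move/Hev; rewrite !inE => /or3P [] /eqP ->.
1-3: by ring.
set dD := diag_mx D.
have DD : dD *m dD *m dD = dD.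
  apply/matrixP => a b; rewrite -mulmxA !mul_diag_mx !mxE.
  case: (eqVneq a b) => [->|nab];  first by rewrite !mulr1n -[RHS]HD; ring.
  by rewrite !mulr0n !mulr0.
have E : P *m (h *m h *m h) = P *m h.
  rewrite !mulmxA PhD -(mulmxA dD P h) PhD (mulmxA dD dD P).
  by rewrite -(mulmxA (dD *m dD) P h) PhD (mulmxA (dD *m dD) dD P) DD.
by rewrite -[LHS](mulKmx Pu) E mulKmx.
Qed.

End Alg.
Section P.
Variables (R : realType) (n : nat) (h : 'M[R]_n).
Hypothesis h3 : h *m h *m h = h.
Implicit Types (x y : 'rV[R]_n).

Lemma mh x : x *m h *m h *m h = x *m h.
Proof. by rewrite -!mulmxA (mulmxA h h h) h3. Qed.

Lemma p1E x : p1 h x = 2^-1 *: (x *m h + x *m h *m h).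
Proof. by rewrite /p1 mulmxA. Qed.
Lemma pm1E x : pm1 h x = 2^-1 *: (x *m h *m h - x *m h).
Proof. by rewrite /pm1 mulmxA. Qed.
Lemma p0E x : p0 h x = x - x *m h *m h.
Proof. by rewrite /p0 mulmxA. Qed.

Ltac vsolve := apply/rowP => i; rewrite !mxE; field; by rewrite ?pnatr_eq0.

Lemma p1h x : p1 h x *m h = p1 h x.
Proof.
rewrite p1E -scalemxAl mulmxDl mh.
move: (x *m h) (x *m h *m h) => u w; vsolve.
Qed.

Lemma pm1h x : pm1 h x *m h = - pm1 h x.
Proof.
rewrite pm1E -scalemxAl mulmxBl mh.
move: (x *m h) (x *m h *m h) => u w; vsolve.
Qed.

Lemma p0h x : p0 h x *m h = 0.
Proof. by rewrite p0E mulmxBl mh subrr. Qed.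

Lemma decomp x : p1 h x + p0 h x + pm1 h x = x.
Proof.
rewrite p1E p0E pm1E.
move: (x *m h) (x *m h *m h) => u w; vsolve.
Qed.

Lemma pminusE x : pminus h x = x *m h *m h.
Proof.
rewrite /pminus p1E pm1E.
move: (x *m h) (x *m h *m h) => u w; vsolve.
Qed.

Lemma ntauE x : - tau h x = 2 *: (x *m h *m h) - x.
Proof.
rewrite /tau p1E p0E pm1E.
move: (x *m h) (x *m h *m h) => u w; vsolve.
Qed.

Lemma pminus_tau x : pminus h x = 2^-1 *: (x + - tau h x).
Proof.
rewrite pminusE ntauE.
move: (x *m h *m h) => w; vsolve.
Qed.

Lemma ntauK x : - tau h (- tau h x) = x.
Proof.
rewrite !ntauE (mulmxDl (2 *: (x *m h *m h))) mulNmx (mulmxDl (2 *: (x *m h *m h) *m h)) mulNmx -!scalemxAl mh.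
move: (x *m h) (x *m h *m h) => u w; vsolve.
Qed.

Lemma E1P x : x *m h = 1 *: x <-> p1 h x = x.
Proof.
split => [H|<-]; last by rewrite p1h scale1r.
rewrite p1E H scale1r H scale1r.
vsolve.
Qed.

Lemma Em1P x : x *m h = (-1) *: x <-> pm1 h x = x.
Proof.
split => [H|<-]; last by rewrite pm1h scaleN1r.
rewrite pm1E H scaleN1r mulNmx H scaleN1r.
vsolve.
Qed.

Lemma EmP x : setadd (eigsp h 1) (eigsp h (-1)) x <-> pminus h x = x.
Proof.
split => [[a [b [Ha [Hb ->]]]]|H].
  move: Ha Hb; rewrite /eigsp pminusE => Ha Hb.
  rewrite (mulmxDl a b h) Ha Hb scale1r scaleN1r (mulmxDl a (- b) h) mulNmx Ha Hb.
  by rewrite scale1r scaleN1r opprK.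
exists (p1 h x), (pm1 h x); split; first by rewrite /eigsp /= p1h scale1r.
by split; [rewrite /eigsp /= pm1h scaleN1r | rewrite -{1}H].
Qed.


Definition Q0 : 'M[R]_n := 1%:M - h *m h.
Definition Q1 : 'M[R]_n := 2^-1 *: (h + h *m h).
Definition Qm1 : 'M[R]_n := 2^-1 *: (h *m h - h).

Lemma hpow k : h ^+ k = (k == 0%N)%:R *: Q0 + Q1 + (-1)^+k *: Qm1.
Proof.
elim: k => [|k IH].
  rewrite expr0 /Q0 /Q1 /Qm1 /=. 
  move: (h *m h) => H; apply/matrixP => i j; rewrite !mxE expr0; field; by rewrite ?pnatr_eq0.
have Q0h : Q0 *m h = 0 by rewrite /Q0 mulmxBl mul1mx h3 subrr.
have Q1h : Q1 *m h = Q1.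
  rewrite /Q1 -scalemxAl mulmxDl h3; move: (h *m h) => H.
  by rewrite addrC.
have Qm1h : Qm1 *m h = - Qm1.
  rewrite /Qm1 -scalemxAl mulmxBl h3 -scalerN opprB //.
rewrite exprSr IH -mulmxE !mulmxDl -(scalemxAl _ Q0) -(scalemxAl _ Qm1) Q0h Q1h Qm1h /= scaler0 add0r.
by rewrite exprS scale0r add0r mulN1r scaleNr scalerN.
Qed.

Lemma exprZmx (t : R) (A : 'M[R]_n) k : (t *: A) ^+ k = t ^+ k *: A ^+ k.
Proof.
elim: k => [|k IH]; first by rewrite !expr0 scale1r.
by rewrite !exprS IH -!mulmxE -scalemxAl -scalemxAr scalerA.
Qed.

Lemma exp_series_cvg (t : R) :
  (fun N : nat => \sum_(k < N) (k`!%:R)^-1 * t ^+ k) @ \oo --> expR t.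
Proof.
have -> : (fun N : nat => \sum_(k < N) (k`!%:R)^-1 * t ^+ k) = series (exp_coeff t).
  apply/funext => N; rewrite /series /= big_mkord; apply: eq_bigr => k _.
  by rewrite /exp_coeff /= mulrC.
exact: is_cvg_series_exp_coeff.
Qed.

Lemma delta_series_cvg (t : R) :
  (fun N : nat => \sum_(k < N) (k`!%:R)^-1 * t ^+ k * ((k:nat) == 0%N)%:R) @ \oo --> (1:R).
Proof.
apply: cvg_near_cst; near=> N.
have N0 : (0 < N)%N by near: N; exists 1%N.
rewrite -(prednK N0) big_ord_recl big1 /=.
  by rewrite expr0 !mulr1 invr1 addr0.
by move=> i _; rewrite mulr0.
Unshelve. all: by end_near.
Qed.

Lemma matexpE (t : R) : matexp (t *: h) = Q0 + expR t *: Q1 + expR (- t) *: Qm1.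
Proof.
rewrite /matexp.
have -> : (fun N : nat => \sum_(k < N) (k`!%:R)^-1 *: (t *: h) ^+ k) =
  (fun N : nat => (\sum_(k < N) (k`!%:R)^-1 * t ^+ k * ((k:nat) == 0%N)%:R) *: Q0 +
     (\sum_(k < N) (k`!%:R)^-1 * t ^+ k) *: Q1 +
     (\sum_(k < N) (k`!%:R)^-1 * (- t) ^+ k) *: Qm1).
  apply/funext => N; rewrite !scaler_suml -!big_split /=; apply: eq_bigr => k _.
  rewrite exprZmx hpow; move: Q0 Q1 Qm1 => A B C.
  apply/matrixP => i j; rewrite !mxE [(- t) ^+ k]exprNn.
  move: (t ^+ k) ((-1) ^+ k) (k`!%:R^-1) (((k:nat) == 0%N)%:R) => a b c d; ring.
apply: cvg_lim; first exact: norm_hausdorff.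
rewrite -{2}(scale1r Q0).
apply: cvgD; first apply: cvgD.
- exact: cvgZl (delta_series_cvg t).
- exact: cvgZl (exp_series_cvg t).
- exact: cvgZl (exp_series_cvg (- t)).
Qed.
End P.
Section Cone.
Variables (R : realType) (n : nat) (C : set 'rV[R]_n).
Hypothesis cC : convex_cone C.
Implicit Types (x y z w : 'rV[R]_n).

Lemma C0 : C 0. Proof. by case: cC. Qed.
Lemma CD x y : C x -> C y -> C (x + y). Proof. by case: cC => _ [+ _]; apply. Qed.
Lemma CZ (a : R) x : 0 <= a -> C x -> C (a *: x). Proof. by case: cC => _ [_]; apply. Qed.
Lemma Csum (I : finType) (f : I -> 'rV[R]_n) : (forall i, C (f i)) -> C (\sum_i f i).
Proof. by move=> H; apply: big_ind => //; [exact: C0 | exact: CD]. Qed.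

Lemma int_pre (g : 'rV[R]_n -> 'rV[R]_n) z : {for z, continuous g} ->
  interior C (g z) -> (forall w, C (g w) -> C w) -> interior C z.
Proof.
move=> gc hz hw; exact: (filterS hw (gc _ hz)).
Qed.

Lemma int_addC x y : interior C x -> C y -> interior C (x + y).
Proof.
move=> hx hy; apply: (@int_pre (fun w => w - y)).
- exact: (cvgB cvg_id (cvg_cst y)).
- by rewrite addrK.
- by move=> w Hw; rewrite -(subrK y w); apply: CD.
Qed.

Lemma int_scale (a : R) x : 0 < a -> interior C x -> interior C (a *: x).
Proof.
move=> a0 hx; apply: (@int_pre (fun w => a^-1 *: w)).
- exact: (cvgZr cvg_id).
- by rewrite scalerA mulVf ?gt_eqF // scale1r.
- move=> w Hw; have -> : w = a *: (a^-1 *: w) by rewrite scalerA divff ?gt_eqF // scale1r.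
  by apply: CZ => //; exact: ltW.
Qed.

Lemma coord_le (d : 'rV[R]_n) i : `|d 0 i| <= `|d|.
Proof.
have -> : `|d| = mx_norm d by [].
rewrite mx_normrE.
exact: (le_bigmax 0 (fun ij : 'I_1 * 'I_n => `|d ij.1 ij.2|) (0, i)).
Qed.


Lemma cvg_sumZ (T : Type) (F : set_system T) (FF : Filter F) (r : seq 'I_n)
  (f : 'I_n -> T -> R) (a : 'I_n -> R) (v : 'I_n -> 'rV[R]_n) :
  (forall i, f i t @[t --> F] --> a i) ->
  (\sum_(i <- r) f i t *: v i) @[t --> F] --> \sum_(i <- r) a i *: v i.
Proof.
move=> H; elim: r => [|i r IH].
  rewrite big_nil; under eq_cvg do rewrite big_nil; exact: cvg_cst.
rewrite big_cons; under eq_cvg do rewrite big_cons.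
by apply: cvgD; [exact: cvgZl | exact: IH].
Qed.

Lemma mulmx_cont (M : 'M[R]_n) : continuous (fun x : 'rV[R]_n => x *m M).
Proof.
have -> : (fun x : 'rV[R]_n => x *m M) = (fun x => \sum_i x 0 i *: row i M).
  by apply/funext => x; rewrite mulmx_sum_row.
move=> x; apply: (@cvg_sumZ _ (nbhs x)) => i; exact: coord_continuous.
Qed.

Lemma int_nonempty : generating C -> exists c, interior C c.
Proof.
move=> gen.
have /choice [ab Hab] : forall i : 'I_n, exists p : 'rV[R]_n * 'rV[R]_n,
    C p.1 /\ C p.2 /\ 'e_i = p.1 - p.2.
  by move=> i; have [a [b [Ca [Cb E]]]] := gen 'e_i; exists (a, b).
exists (\sum_i ((ab i).1 + (ab i).2)).
rewrite /interior; apply/nbhs_ballP; exists 1 => //= z.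
rewrite -ball_normE /= => Hz.
set s := \sum_i _ in Hz *.
set d := z - s.
have Hd : `|d| < 1 by rewrite /d distrC.
have -> : z = \sum_i ((1 + d 0 i) *: (ab i).1 + (1 - d 0 i) *: (ab i).2).
  rewrite (eq_bigr (fun i => ((ab i).1 + (ab i).2) + d 0 i *: 'e_i)); last first.
    move=> i _; have [_ [_ ->]] := Hab i.
    by apply/rowP => j; rewrite !mxE; ring.
  by rewrite big_split /= -row_sum_delta /d addrC subrK.
apply: Csum => i; have [Ca [Cb _]] := Hab i.
have := le_lt_trans (coord_le d i) Hd; rewrite ltr_norml => /andP [h1 h2].
by apply: CD; apply: CZ => //; lra.
Qed.

Section Proj.
Variable M : 'M[R]_n.
Hypothesis MM : forall x, x *m M *m M = x *m M.
Hypothesis MC : forall x, C x -> C (x *m M).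
Let Fix := [set x : 'rV[R]_n | x *m M = x].

Lemma projC : (fun x => x *m M) @` C = C `&` Fix.
Proof.
apply/seteqP; split => [_ [x Cx <-]|y [Cy Fy]].
  by split; [exact: MC | exact: MM].
by exists y.
Qed.

Lemma proj_int_sub : (fun x => x *m M) @` interior C `<=` relint Fix (C `&` Fix).
Proof.
move=> _ [x ix <-]; split; last exact: MM.
exists [set z | interior C (z + (x - x *m M))]; split.
  have : continuous (fun z : 'rV[R]_n => z + (x - x *m M)).
    by move=> z; exact: (cvgD cvg_id (cvg_cst _)).
  by move/continuousP; apply; exact: open_interior.
split; first by rewrite /= addrCA subrr addr0.
move=> z [iz Fz]; split => //.
have := MC _ (interior_subset iz).
by rewrite mulmxDl mulmxBl MM Fz subrr addr0.
Qed.

Lemma relint_perturb y v : relint Fix (C `&` Fix) y -> v *m M = v ->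
  exists eps, 0 < eps /\ forall d, 0 <= d <= eps -> C (y - d *: v) /\ Fix (y - d *: v).
Proof.
move=> [[U [oU [Uy sU]]] Fy] Fv.
have : nbhs y U by apply: open_nbhs_nbhs; split.
move/nbhs_ballP => [e /= e0 bU].
set eps := e / (`|v| + 1).
have eps0 : 0 < eps by rewrite /eps divr_gt0 // ltr_wpDl.
exists eps; split => // d /andP [d0 de].
have Fyv : Fix (y - d *: v) by rewrite /Fix /= mulmxBl -scalemxAl Fv Fy.
suff : (U `&` Fix) (y - d *: v) by move/sU => [].
split => //; apply: bU; rewrite -ball_normE /=.
rewrite opprB addrC subrK normrZ ger0_norm //.
have : eps * `|v| < e.
  rewrite /eps mulrAC ltr_pdivrMr ?ltr_wpDl //.
  have := normr_ge0 v; nra.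
have := normr_ge0 v; nra.
Qed.

Lemma proj_int_sup c : interior C c ->
  relint Fix (C `&` Fix) `<=` (fun x => x *m M) @` interior C.
Proof.
move=> ic y Hy; have [eps [e0 H]] := @relint_perturb y (c *m M) Hy (MM c).
have [Cy' Fy'] : C (y - eps *: (c *m M)) /\ Fix (y - eps *: (c *m M)).
  by apply: H; rewrite ltW //= lexx.
exists (y - eps *: (c *m M) + eps *: c).
  by rewrite addrC; apply: int_addC => //; exact: int_scale.
by rewrite mulmxDl Fy' -scalemxAl subrK.
Qed.

End Proj.
End Cone.

Section Sets.
Variables (R : realType) (n : nat).
Implicit Types (A E U : set 'rV[R]_n).

Lemma setoppK A : setopp (setopp A) = A.
Proof.
apply/seteqP; split => [_ [_ [a Aa <-] <-]|x Ax]; first by rewrite opprK.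
by exists (- x); [exists x | rewrite opprK].
Qed.

Lemma setopp_sub A U : A `<=` U -> setopp A `<=` setopp U.
Proof. by move=> AU _ [a Aa <-]; exists a => //; exact: AU. Qed.

Lemma setoppI A E : (forall x, E x -> E (- x)) -> setopp A `&` E = setopp (A `&` E).
Proof.
move=> EN; apply/seteqP; split => [x [[a Aa <-] Ea]|_ [a [Aa Ea] <-]].
  by exists a => //; split => //; rewrite -[a]opprK; exact: EN.
by split; [exists a | exact: EN].
Qed.

Lemma relint_opp_sub E A : (forall x, E x -> E (- x)) ->
  relint E (setopp A) `<=` setopp (relint E A).
Proof.
move=> EN y [[U [oU [Uy sU]]] Ey]; exists (- y); last by rewrite opprK.
split; last exact: EN.
exists [set w | U (- w)]; split.
  have : continuous (fun w : 'rV[R]_n => - w) by move=> w; exact: (cvgN cvg_id).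
  by move/continuousP; apply.
split; first by rewrite /= opprK.
move=> w [Uw Ew]; have := sU (- w) (conj Uw (EN _ Ew)).
by move=> [a Aa /oppr_inj <-].
Qed.

Lemma relint_opp E A : (forall x, E x -> E (- x)) ->
  relint E (setopp A) = setopp (relint E A).
Proof.
move=> EN; apply/seteqP; split; first exact: relint_opp_sub.
have := @relint_opp_sub E (setopp A) EN; rewrite setoppK => /setopp_sub.
by rewrite setoppK.
Qed.

Lemma lim_lemma (C : set 'rV[R]_n) a b c : closed C ->
  (forall r : R, 0 < r -> C (r *: a + (r * r) *: c + b)) -> C b.
Proof.
move=> Ccl H.
have L : (harmonic k *: a + (harmonic k * harmonic k) *: c + b) @[k --> \oo] -->
   (0 : R) *: a + ((0 : R) * 0) *: c + b.
  apply: cvgD; last exact: cvg_cst.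
  apply: cvgD; apply: cvgZl; first exact: cvg_harmonic.
  exact: cvgM cvg_harmonic cvg_harmonic.
rewrite mul0r !scale0r !add0r in L.
apply: (closed_cvg _ Ccl _ _ L); apply: nearW => k; apply: H.
by rewrite /harmonic /= invr_gt0 ltr0n.
Qed.
End Sets.

Arguments diag_h3 {R n h}.
Arguments mh {R n h}. Arguments p1h {R n h}. Arguments pm1h {R n h}. Arguments p0h {R n h}.
Arguments decomp {R n h}. Arguments pminusE {R n h}. Arguments ntauE {R n h}.
Arguments pminus_tau {R n h}. Arguments ntauK {R n h}. Arguments E1P {R n h}.
Arguments Em1P {R n h}. Arguments EmP {R n h}. Arguments matexpE {R n h}.
Arguments C0 {R n C}. Arguments CD {R n C}. Arguments CZ {R n C}.
Arguments int_pre {R n C} g {z}. Arguments int_addC {R n C}. Arguments int_scale {R n C}.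
Arguments mulmx_cont {R n}. Arguments int_nonempty {R n C}.
Arguments projC {R n C M}. Arguments proj_int_sub {R n C M}. Arguments proj_int_sup {R n C} cC {M}.
Arguments relint_perturb {R n C M y v}.
Arguments setoppK {R n}. Arguments setoppI {R n A E}. Arguments relint_opp {R n E A}.
Arguments lim_lemma {R n C}.

Theorem lemma3p2 (R : realType) (n : nat) (h : 'M[R]_n) (C : set 'rV[R]_n) :
  diagonalizable h ->
  (forall a : R, eigenvalue h a -> a \in [:: -1; 0; 1]) ->
  convex_cone C -> pointed C -> generating C -> closed C ->
  (forall t : R, (fun x => x *m matexp (t *: h)) @` C = C) ->
  (fun x => - tau h x) @` C = C ->
  let Cp := C `&` eigsp h 1 in
  let Cm := setopp C `&` eigsp h (-1) in
  let Em := setadd (eigsp h 1) (eigsp h (-1)) in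
  (* (i) *)
  [/\ p1 h @` C = Cp,
      pm1 h @` C = setopp Cm,
      p1 h @` (interior C) = relint (eigsp h 1) Cp /\ relint (eigsp h 1) Cp !=set0 &
      pm1 h @` (interior C) = setopp (relint (eigsp h (-1)) Cm) /\
        relint (eigsp h (-1)) Cm !=set0] /\
  (* (ii) *)
  [/\ pminus h @` C = C `&` Em,
      C `&` Em = setadd Cp (setopp Cm),
      pminus h @` (interior C) = interior C `&` Em &
      interior C `&` Em =
        setadd (relint (eigsp h 1) Cp) (setopp (relint (eigsp h (-1)) Cm))] /\
  (* (iii) *)
  C `<=` setadd (setadd Cp (eigsp h 0)) (setopp Cm).
Proof.
move=> Hd Hev cC pC gC clC Hexp Htau Cp Cm Em.
rewrite /Cp /Cm /Em {Cp Cm Em}.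
have h3 := diag_h3 Hd Hev.
have [c ic] := int_nonempty cC gC.
pose q0 := Q0 R n h; pose q1 := Q1 R n h; pose qm1 := Qm1 R n h; pose hh := h *m h.
have p1M : p1 h = (fun x => x *m q1).
  by apply/funext => x; rewrite /p1 /q1 /Q1 -scalemxAr mulmxDr.
have pm1M : pm1 h = (fun x => x *m qm1).
  by apply/funext => x; rewrite /pm1 /qm1 /Qm1 -scalemxAr mulmxBr.
have pmM : pminus h = (fun x => x *m hh).
  by apply/funext => x; rewrite pminusE // mulmxA.
pose F1 := [set x : 'rV[R]_n | x *m q1 = x].
pose Fm := [set x : 'rV[R]_n | x *m qm1 = x].
pose Fh := [set x : 'rV[R]_n | x *m hh = x].
have E1eq : eigsp h 1 = F1.
  apply/seteqP; split => x /=; rewrite /F1 /eigsp /=.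
    by move/((E1P h3 _).1); rewrite p1M.
  by move=> H; apply/((E1P h3 _).2); rewrite p1M.
have Emeq : eigsp h (-1) = Fm.
  apply/seteqP; split => x /=; rewrite /Fm /eigsp /=.
    by move/((Em1P h3 _).1); rewrite pm1M.
  by move=> H; apply/((Em1P h3 _).2); rewrite pm1M.
have Ehq : setadd F1 Fm = Fh.
  rewrite -E1eq -Emeq; apply/seteqP; split => x /=.
    by move/((EmP h3 _).1); rewrite pmM.
  by move=> H; apply/((EmP h3 _).2); rewrite pmM.
have FmN : forall x, Fm x -> Fm (- x) by move=> x; rewrite /Fm /= mulNmx => ->.
have q1q1 : forall x : 'rV[R]_n, x *m q1 *m q1 = x *m q1.
  move=> x; have := p1h h3 x; rewrite -[X in _ = X]scale1r => /((E1P h3 _).1).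
  by rewrite p1M.
have qm1qm1 : forall x : 'rV[R]_n, x *m qm1 *m qm1 = x *m qm1.
  move=> x; have := pm1h h3 x; rewrite -scaleN1r => /((Em1P h3 _).1).
  by rewrite pm1M.
have hhhh : forall x : 'rV[R]_n, x *m hh *m hh = x *m hh.
  by move=> x; rewrite /hh !mulmxA mh.
have hhdec : forall x : 'rV[R]_n, x *m hh = x *m q1 + x *m qm1.
  by move=> x; rewrite -[x *m hh]/((fun y => y *m hh) x) -pmM /pminus p1M pm1M.
have flow : forall (x : 'rV[R]_n) (t : R), C x ->
    C (x *m q0 + expR t *: (x *m q1) + expR (- t) *: (x *m qm1)).
  move=> x t Cx; rewrite -(Hexp t); exists x => //.
  by rewrite matexpE // !mulmxDr -!scalemxAr.
have q1C : forall x : 'rV[R]_n, C x -> C (x *m q1).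
  move=> x Cx; apply: (lim_lemma (x *m q0) _ (x *m qm1) clC) => r r0.
  have := flow x (- ln r) Cx; rewrite opprK expRN lnK ?posrE // => H.
  have := CZ cC _ _ (ltW r0) H.
  move: (x *m q0) (x *m q1) (x *m qm1) => a b d.
  suff -> : r *: (a + r^-1 *: b + r *: d) = r *: a + (r * r) *: d + b by [].
  apply/rowP => i; rewrite !mxE; field; by rewrite gt_eqF.
have qm1C : forall x : 'rV[R]_n, C x -> C (x *m qm1).
  move=> x Cx; apply: (lim_lemma (x *m q0) _ (x *m q1) clC) => r r0.
  have := flow x (ln r) Cx; rewrite expRN lnK ?posrE // => H.
  have := CZ cC _ _ (ltW r0) H.
  move: (x *m q0) (x *m q1) (x *m qm1) => a b d.
  suff -> : r *: (a + r *: b + r^-1 *: d) = r *: a + (r * r) *: b + d by [].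
  apply/rowP => i; rewrite !mxE; field; by rewrite gt_eqF.
have ntC : forall x : 'rV[R]_n, C x -> C (- tau h x) by move=> x Cx; rewrite -Htau; exists x.
have ntM : (fun x => - tau h x) = (fun x => x *m (2 *: hh - 1%:M)).
  apply/funext => x; rewrite ntauE // mulmxBr mulmx1 -scalemxAr /hh mulmxA //.
have ntint : forall x : 'rV[R]_n, interior C x -> interior C (- tau h x).
  move=> x ix; apply: (int_pre (fun w => - tau h w)).
  - by rewrite ntM; exact: mulmx_cont.
  - by rewrite ntauK.
  - by move=> w /ntC; rewrite ntauK.
have hhC : forall x : 'rV[R]_n, C x -> C (x *m hh).
  move=> x Cx; rewrite -[x *m hh]/((fun y => y *m hh) x) -pmM pminus_tau //.
  apply: (CZ cC); first by rewrite invr_ge0 ler0n.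
  exact: (CD cC _ _ Cx (ntC _ Cx)).
have Phint : forall x : 'rV[R]_n, interior C x -> interior C (x *m hh).
  move=> x ix; rewrite -[x *m hh]/((fun y => y *m hh) x) -pmM pminus_tau //.
  apply: (int_scale cC); first by rewrite invr_gt0 ltr0n.
  by apply: (int_addC cC) => //; apply: interior_subset; exact: ntint.
have int1 : (fun x => x *m q1) @` interior C = relint F1 (C `&` F1).
  apply/seteqP; split; first exact: proj_int_sub.
  exact: proj_int_sup ic.
have intm : (fun x => x *m qm1) @` interior C = relint Fm (C `&` Fm).
  apply/seteqP; split; first exact: proj_int_sub.
  exact: proj_int_sup ic.
rewrite E1eq Emeq Ehq p1M pm1M pmM.
rewrite (setoppI FmN) setoppK (relint_opp FmN) setoppK.
split; first split.
- exact: projC.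
- exact: projC.
- by split => //; exists (c *m q1); rewrite -int1; exists c.
- split => //; exists (- (c *m qm1)); exists (c *m qm1) => //.
  by rewrite -intm; exists c.
split; first split.
- exact: projC.
- apply/seteqP; split => [y [Cy Fy]|_ [a [b [[Ca Fa] [[Cb Fb] ->]]]]].
    exists (y *m q1), (y *m qm1); split; first by split; [exact: q1C | exact: q1q1].
    split; first by split; [exact: qm1C | exact: qm1qm1].
    by rewrite -hhdec.
  split; first exact: CD.
  by rewrite -Ehq; exists a, b.
- apply/seteqP; split => [_ [x ix <-]|y [iy Fy]]; last by exists y.
  by split; [exact: Phint | exact: hhhh].
- apply/seteqP; split => [y [iy Fy]|_ [a [b [Ha [Hb ->]]]]].
    exists (y *m q1), (y *m qm1); split; first by rewrite -int1; exists y.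
    split; first by rewrite -intm; exists y.
    by rewrite -hhdec Fy.
  have [e1 [e10 H1]] := relint_perturb Ha (q1q1 c).
  have [e2 [e20 H2]] := relint_perturb Hb (qm1qm1 c).
  pose d := Num.min e1 e2.
  have d0 : 0 < d by rewrite lt_min e10 e20.
  have [Ca' _] := H1 d (ltac:(by rewrite ltW //= ge_min lexx)).
  have [Cb' _] := H2 d (ltac:(by rewrite ltW //= ge_min lexx orbT)).
  split.
    have -> : a + b = d *: (c *m hh) + ((a - d *: (c *m q1)) + (b - d *: (c *m qm1))).
      rewrite hhdec; move: (c *m q1) (c *m qm1) => u w.
      by apply/rowP => i; rewrite !mxE; ring.
    exact: (int_addC cC _ _ (int_scale cC _ _ d0 (Phint c ic)) (CD cC _ _ Ca' Cb')).
  by rewrite -Ehq; exists a, b; split; [case: Ha | split; [case: Hb|]].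
- move=> x Cx; exists (x *m q1 + p0 h x), (x *m qm1); split.
    exists (x *m q1), (p0 h x); split; first by split; [exact: q1C | exact: q1q1].
    by split => //; rewrite /eigsp /= p0h // scale0r.
  split; first by split; [exact: qm1C | exact: qm1qm1].
  by rewrite -{1}(@decomp R n h x) p1M pm1M.
Qed.
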